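(* There is an algorithm that, given an integer $k\ge 1$ and a finite multiset $D$ of $n$ nonnegative integers, decides in $O(n\log n)$ time whether there exists a rooted $k$-ary tree whose multiset of node depths equals $D$.
   Context: A rooted $k$-ary tree is a rooted tree in which every node has at most $k$ children. The depth of a node is the number of edges on the path from it to the root; the multiset of depths has one entry per node. Running time is measured with arithmetic on the input integers taking unit time. *)

(* Defs.v *)
From mathcomp Require Import all_boot all_order all_algebra.
Set Implicit Arguments. Unset Strict Implicit. Unset Printing Implicit Defensive.
Import Order.TTheory GRing.Theory Num.Theory.

Inductive tree : Type := Node of seq tree.

(* Multiset (as a list, compared up to permutation) of node depths, one entry
   per node; the root has depth 0. *)
Fixpoint depths (t : tree) : seq nat :=
  let: Node cs := t in
  0 :: flatten (map (fun c => map S (depths c)) cs).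

Fixpoint kary (k : nat) (t : tree) : bool :=
  let: Node cs := t in (size cs <= k) && all (kary k) cs.

(* Memory: infinitely many cells indexed by nat, each holding an (unbounded)
   integer; arithmetic (+, -, * ) and comparison take unit time; indirect
   addressing is allowed. *)
Inductive instr : Type :=
  | IConst of nat & int          (* m[r] := z *)
  | IAdd of nat & nat & nat      (* m[r] := m[a] + m[b] *)
  | ISub of nat & nat & nat      (* m[r] := m[a] - m[b] *)
  | IMul of nat & nat & nat      (* m[r] := m[a] * m[b] *)
  | ILoad of nat & nat           (* m[r] := m[ m[a] ] *)
  | IStore of nat & nat          (* m[ m[a] ] := m[r] *)
  | IJlt of nat & nat & nat      (* if m[a] < m[b] then goto l *)
  | IJmp of nat                  (* goto l *)
  | IHalt.

Definition program := seq instr.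
Definition memory := nat -> int.
Definition config : Type := (nat * memory)%type.   (* program counter, memory *)

(* Address denoted by an integer (negative integers denote cell 0). *)
Definition addr (z : int) : nat := if z is Posz p then p else 0.

Definition upd (m : memory) (r : nat) (v : int) : memory :=
  fun i => if i == r then v else m i.

Definition halted (P : program) (c : config) : bool :=
  if nth IHalt P c.1 is IHalt then true else false.

Definition step (P : program) (c : config) : config :=
  let: (pc, m) := c in
  match nth IHalt P pc with
  | IConst r z => (pc.+1, upd m r z)
  | IAdd r a b => (pc.+1, upd m r (m a + m b)%R)
  | ISub r a b => (pc.+1, upd m r (m a - m b)%R)
  | IMul r a b => (pc.+1, upd m r (m a * m b)%R)
  | ILoad r a => (pc.+1, upd m r (m (addr (m a))))
  | IStore a r => (pc.+1, upd m (addr (m a)) (m r))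
  | IJlt a b l => (if (m a < m b)%R then l else pc.+1, m)
  | IJmp l => (l, m)
  | IHalt => (pc, m)
  end.

Definition init (k : nat) (D : seq nat) : config :=
  (0, fun i => if i == 0 then (k%:Z)%R
               else if i == 1 then ((size D)%:Z)%R
               else if i < (size D).+2 then ((nth 0 D (i - 2))%:Z)%R
               else 0%R).

Definition output (c : config) : bool := (c.2 0 != 0)%R.

Definition run (P : program) (t : nat) (c : config) : config := iter t (step P) c.

Definition kary_depth_realizable (k : nat) (D : seq nat) : Prop :=
  exists t : tree, kary k t /\ perm_eq (depths t) D.

(* Main.v *)
Require Import Defs.
From mathcomp Require Import all_boot all_order all_algebra.
From mathcomp Require Import zify.
Set Implicit Arguments. Unset Strict Implicit. Unset Printing Implicit Defensive.

Definition Fdep (fs : seq tree) := flatten (map depths fs).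
Definition kids (t : tree) := let: Node cs := t in cs.
Definition children (fs : seq tree) := flatten (map kids fs).

Lemma Fdep_cat a b : Fdep (a ++ b) = Fdep a ++ Fdep b.
Proof. by rewrite /Fdep map_cat flatten_cat. Qed.

Lemma depthsE cs : depths (Node cs) = 0 :: map S (Fdep cs).
Proof.
rewrite /=; congr (_ :: _); elim: cs => [|c cs IH] //=.
by rewrite IH /Fdep /= map_cat.
Qed.

Lemma count_mapS d s : count_mem d.+1 (map S s) = count_mem d s.
Proof. by rewrite count_map; apply: eq_count => x /=. Qed.

Lemma count_mapS0 s : count_mem 0 (map S s) = 0.
Proof. by elim: s. Qed.

Lemma Fdep_cons t fs : Fdep (t :: fs) = depths t ++ Fdep fs.
Proof. by []. Qed.

Lemma Fdep0 fs : count_mem 0 (Fdep fs) = size fs.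
Proof.
elim: fs => [|[cs] fs IH] //.
by rewrite Fdep_cons depthsE count_cat /= count_mapS0 IH.
Qed.

Lemma FdepS d fs : count_mem d.+1 (Fdep fs) = count_mem d (Fdep (children fs)).
Proof.
elim: fs => [|[cs] fs IH] //.
rewrite Fdep_cons depthsE count_cat /= count_mapS IH /children /= -/(children fs).
by rewrite Fdep_cat count_cat.
Qed.
Lemma children_size k fs : all (kary k) fs -> size (children fs) <= k * size fs.
Proof.
elim: fs => [|[cs] fs IH] //= /andP[/andP[h1 _] h2].
rewrite size_cat -/(children fs) mulnS; apply: leq_add => //; exact: IH.
Qed.

Lemma children_kary k fs : all (kary k) fs -> all (kary k) (children fs).
Proof.
elim: fs => [|[cs] fs IH] //= /andP[/andP[_ h1] h2].
by rewrite all_cat h1 IH.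
Qed.

Lemma nec_forest k d : forall fs, all (kary k) fs ->
  count_mem d.+1 (Fdep fs) <= k * count_mem d (Fdep fs).
Proof.
elim: d => [|d IH] fs H.
  by rewrite FdepS Fdep0 Fdep0 children_size.
rewrite (FdepS d.+1) (FdepS d fs); apply: IH; exact: children_kary.
Qed.

Lemma distribute k m : forall F : seq tree, size F <= k * m ->
  exists rs : seq (seq tree), [/\ size rs = m, all (fun cs => size cs <= k) rs & flatten rs = F].
Proof.
elim: m => [|m IH] F H.
  by exists [::]; move: H; rewrite muln0 leqn0 => /eqP/size0nil ->.
have hd : size (drop k F) <= k * m by rewrite size_drop; move: H; rewrite mulnS; lia.
have [rs [h1 h2 h3]] := IH (drop k F) hd.
exists (take k F :: rs); split => //=; first by rewrite h1.
  by rewrite h2 size_take; case: ltnP => // ; rewrite andbT.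
by rewrite h3 cat_take_drop.
Qed.

Lemma lift_forest k m F : size F <= k * m -> all (kary k) F ->
  exists fs, [/\ size fs = m, all (kary k) fs, count_mem 0 (Fdep fs) = m &
     forall d, count_mem d.+1 (Fdep fs) = count_mem d (Fdep F)].
Proof.
move=> hs hk; have [rs [h1 h2 h3]] := distribute hs.
have ch : children (map Node rs) = flatten rs.
  by rewrite /children -map_comp; congr flatten; apply: map_id.
exists (map Node rs); split.
- by rewrite size_map.
- move: hk; rewrite -h3 {h1 h3 ch}; elim: rs h2 => [|cs rs IH] //= /andP[-> h2].
  by rewrite all_cat => /andP[-> /(IH h2)].
- by rewrite Fdep0 size_map.
- by move=> d; rewrite FdepS ch h3.
Qed.

Lemma build k h : forall c : nat -> nat, (forall i, c i.+1 <= k * c i) ->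
  (forall i, h < i -> c i = 0) ->
  exists fs, [/\ size fs = c 0, all (kary k) fs & forall d, count_mem d (Fdep fs) = c d].
Proof.
elim: h => [|h IH] c hc hz.
  have [fs [h1 h2 h3 h4]] := @lift_forest k (c 0) [::] (leq0n _) isT.
  exists fs; split => // -[|d]; first by rewrite h3.
  by rewrite h4 hz.
have [F [h1 h2 h3]] := IH (fun i => c i.+1) (fun i => hc i.+1) (fun i hi => hz i.+1 hi).
have [fs [g1 g2 g3 g4]] := @lift_forest k (c 0) F ltac:(by rewrite h1 hc) h2.
exists fs; split => // -[|d]; first by rewrite g3.
by rewrite g4 h3.
Qed.

Lemma le_foldmax (D : seq nat) i : i \in D -> i <= foldr maxn 0 D.
Proof.
elim: D => [|x D IH] //=; rewrite in_cons.
case/orP => [/eqP ->|/IH]; first by rewrite leq_maxl.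
move=> H; apply: leq_trans H _; exact: leq_maxr.
Qed.

Definition cond k (D : seq nat) :=
  count_mem 0 D = 1 /\ forall d, count_mem d.+1 D <= k * count_mem d D.

Lemma real_iff k D : kary_depth_realizable k D <-> cond k D.
Proof.
split.
  move=> [t [hk /permP hp]].
  have e : forall d, count_mem d D = count_mem d (Fdep [:: t]).
    by move=> d; rewrite /Fdep /= cats0 hp.
  split; first by rewrite e Fdep0.
  by move=> d; rewrite !e; apply: nec_forest; rewrite /= hk.
move=> [h0 hS].
pose h := foldr maxn 0 D.
have hz : forall i, h < i -> count_mem i D = 0.
  move=> i hi; apply/count_memPn; apply/negP => hin.
  suff : i <= h by rewrite leqNgt hi.
  exact: le_foldmax.
have [fs [h1 h2 h3]] := build hS hz.
move: h1; rewrite h0; case: fs h2 h3 => [|t [|]] // h2 h3 _.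
exists t; split; first by move: h2 => /= /andP[].
apply/allP => x _ /=; apply/eqP; by rewrite -h3 /Fdep /= cats0.
Qed.

Import Order.TTheory GRing.Theory Num.Theory.
Set Bullet Behavior "Strict Subproofs".

Definition reaches (P : program) (c : config) (Q : config -> Prop) (T : nat) :=
  exists s, s <= T /\ Q (run P s c).

Lemma reach_now P c (Q : config -> Prop) T : Q c -> reaches P c Q T.
Proof. by move=> h; exists 0. Qed.

Lemma reach_step P c Q T : reaches P (step P c) Q T -> reaches P c Q T.+1.
Proof. by move=> [s [hs hq]]; exists s.+1; split => //; rewrite /run iterSr. Qed.

Lemma reach_seq P c (Q1 Q2 : config -> Prop) T1 T2 : reaches P c Q1 T1 ->
  (forall c', Q1 c' -> reaches P c' Q2 T2) -> reaches P c Q2 (T1 + T2).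
Proof.
move=> [s [hs hq]] /(_ _ hq) [s' [hs' hq']]; exists (s' + s); split; first lia.
by rewrite /run iterD.
Qed.

Lemma reach_mono P c Q T T' : T <= T' -> reaches P c Q T -> reaches P c Q T'.
Proof. by move=> h [s [hs hq]]; exists s; split => //; lia. Qed.

Lemma reach_loop P (Inv : nat -> config -> Prop) Q b :
  (forall j c, Inv j.+1 c -> reaches P c (fun c' => Inv j c' \/ Q c') b) ->
  (forall c, Inv 0 c -> reaches P c Q b) ->
  forall j c, Inv j c -> reaches P c Q (j.+1 * b).
Proof.
move=> hS h0; elim => [|j IH] c hc; first by rewrite mul1n; exact: h0.
rewrite mulSn; apply: reach_seq (hS _ _ hc) _ => c' [/IH //|hq].
exact: reach_now.
Qed.

Definition PROG : program := [::
  IAdd 1 1 0; IAdd 1 1 0; IAdd 1 1 0; IAdd 1 1 0;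
  IAdd 1 1 0; IAdd 1 1 0; IAdd 1 1 0; IAdd 1 1 0;
  IStore 1 0;
  IConst 0 2; IAdd 0 0 1; IStore 0 2;
  IConst 0 3; IAdd 0 0 1; IStore 0 3;
  IConst 0 4; IAdd 0 0 1; IStore 0 4;
  IConst 0 5; IAdd 0 0 1; IStore 0 5;
  IConst 0 6; IAdd 0 0 1; IStore 0 6;
  IConst 0 7; IAdd 0 0 1; IStore 0 7;
  ILoad 2 1;
  ISub 3 1 2; ISub 3 3 2; ISub 3 3 2; ISub 3 3 2;
  ISub 3 3 2; ISub 3 3 2; ISub 3 3 2; ISub 3 3 2;
  IConst 4 0;
  (* 37 *) IJlt 4 3 39; IJmp 56;
  (* 39 *) IConst 6 2; IAdd 7 4 6; IConst 6 5; IJlt 6 4 44;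
  IAdd 7 7 1;
  (* 44 *) ILoad 5 7; IJlt 5 3 47; IJmp 76;
  (* 47 *) IConst 6 8; IAdd 7 1 6; IAdd 7 7 5; ILoad 6 7;
  IConst 0 1; IAdd 6 6 0; IStore 7 6; IAdd 4 4 0; IJmp 37;
  (* 56 *) IConst 6 8; IAdd 7 1 6; ILoad 5 7; IConst 6 1;
  IJlt 5 6 76; IJlt 6 5 76; IAdd 4 7 3;
  (* 63 *) IConst 6 1; IAdd 6 7 6; IJlt 6 4 67; IJmp 74;
  (* 67 *) ILoad 5 7; IMul 5 5 2; ILoad 0 6; IJlt 5 0 76;
  IConst 0 0; IAdd 7 6 0; IJmp 63;
  (* 74 *) IConst 0 1; IHalt;
  (* 76 *) IConst 0 0; IHalt ].

Lemma updE m r v i : upd m r v i = if i == r then v else m i.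
Proof. by []. Qed.

Arguments upd _ _ _ _ /.
Ltac stp := apply: reach_step; rewrite /step {2}/PROG /=.

Lemma cond_lt k D : cond k D -> forall x, x \in D -> x < size D.
Proof.
move=> [h0 hS] x hx.
have st1 : forall d, d.+1 \in D -> d \in D.
  move=> d; rewrite -!has_pred1 !has_count => h.
  have := leq_trans h (hS d); by case: (count_mem d D); rewrite ?muln0.
have st2 : forall m d, d + m = x -> d \in D.
  elim => [|m IH] d hd; first by move: hd; rewrite addn0 => ->.
  apply: st1; apply: IH; lia.
have := @uniq_leq_size _ (iota 0 x.+1) D (iota_uniq _ _).
rewrite size_iota; apply => d; rewrite mem_iota add0n => hd.
apply: (st2 (x - d)); lia.
Qed.

Section S.
Variables (k : nat) (D : seq nat).
Hypothesis hk : 1 <= k.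
Let n := size D.
Let A := n + 8 * k.
Let C := A + 8.
Definition loc j := if j < 6 then j + 2 + A else j + 2.


Ltac dec := repeat match goal with
 | |- context [?x == ?y :> nat] =>
   let h := fresh in
   first [ have h : (x == y) = false by lia | have h : (x == y) = true by lia ];
   rewrite h; clear h
 end.

Ltac rwm := repeat match goal with H : @eq int (?f ?a) _ |- context [?f ?a] => rewrite H end.
Ltac zs := rewrite -?PoszD -?PoszM /addr.
Ltac zsub := repeat match goal with
 | |- context [(Posz ?a - Posz ?b)%R] => rewrite (@subzn a b ltac:(lia))
 end.
Ltac st := stp; rwm; zs; dec; rewrite ?ltz_nat.


Definition I1 (i : nat) (c : config) :=
  [/\ c.1 = 37, c.2 1 = Posz A, c.2 2 = Posz k, c.2 3 = Posz n &
   [/\ c.2 4 = Posz i, i <= n, forall j, j < n -> c.2 (loc j) = Posz (nth 0 D j),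
     forall d, c.2 (C + d) = Posz (count_mem d (take i D)) &
     all (fun x => x < n) (take i D)]].

Lemma setup m : m 0 = Posz k -> m 1 = Posz n ->
  (forall j, j < n -> m (j + 2) = Posz (nth 0 D j)) ->
  (forall i, n + 2 <= i -> m i = 0%R) ->
  reaches PROG (0, m) (I1 0) 40.
Proof.
move=> h0 h1 hD hz.
do 27 (stp; rewrite ?h0 ?h1; zs; dec).
stp; zs; dec.
do 8 (stp; zs; zsub; dec).
stp.
apply: reach_now; rewrite /I1 /=; split => //; try dec.
- congr Posz; rewrite /A; lia.
- congr Posz; lia.
- split => //.
  + move=> j hj; rewrite /loc; case: (ltnP j 6) => hj6.
      case: j hj hj6 => [|[|[|[|[|[|j]]]]]] // hj _; rewrite /A; dec; exact: (hD _ hj).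
    rewrite /A; dec; exact: (hD _ hj).
  + move=> d; rewrite /C /A; dec; rewrite hz ?take0 //; lia.
  + by rewrite take0.
Qed.

Definition Qfin (c : config) := halted PROG c /\ (output c <-> cond k D).
Definition I1' j c := exists i, i + j = n /\ I1 i c.

Lemma loop1_step j c : I1' j.+1 c -> reaches PROG c (fun c' => I1' j c' \/ Qfin c') 20.
Proof.
case: c => pc m [i [hij [/= -> h1 h2 h3 [h4 hin hloc hcnt hall]]]].
have hA : A = n + 8 * k by [].
have hC : C = A + 8 by [].
have hi : i < n by lia.
stp; rewrite h4 h3 ltz_nat hi.
do 4 st.
have hxin : nth 0 D i \in D by apply: mem_nth.
set x := nth 0 D i.
have hx : forall a, a = loc i -> m a = Posz x by move=> a ->; exact: hloc.
have hcx : forall a, a = C + x -> m a = Posz (count_mem x (take i D)) by move=> a ->; exact: hcnt.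
case: (ltnP x n) => hxn.
- case: ifP => h5; [st; rewrite hx; [|by rewrite /loc ifN //; lia] |
    st; st; rewrite hx; [|by rewrite /loc ifT //; lia]].
  all: st; rewrite hxn; do 4 st; rewrite hcx; last lia; do 5 st;
  apply: reach_now; left; exists i.+1; split; first lia;
  rewrite /I1 /=; dec; rwm; split => //; split => //; [by rewrite addn1 |
  move=> j0 hj0; move: (hloc j0 hj0); rewrite /loc; case: ltnP => h6; dec => // |
  move=> d; rewrite (take_nth 0 hi) -cats1 count_cat /=;
    case: (eqVneq x d) => [<-|hd]; dec; [by rewrite addn0 | by rewrite hcnt !addn0] |
  by rewrite (take_nth 0 hi) all_rcons hxn hall].
- have hxn' : (x < n) = false by rewrite ltnNge hxn.
  case: ifP => h5; [st; rewrite hx; [|by rewrite /loc ifN //; lia] |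
    st; st; rewrite hx; [|by rewrite /loc ifT //; lia]];
  st; rewrite hxn' /=.
  all: do 2 st; apply: reach_now; right; split => //;
  rewrite /output /=; split => // /cond_lt /(_ _ hxin); by rewrite ltnNge hxn.
Qed.

Definition Mid (c : config) :=
  [/\ c.1 = 56, c.2 1 = Posz A, c.2 2 = Posz k, c.2 3 = Posz n &
   (forall d, c.2 (C + d) = Posz (count_mem d D)) /\ all (fun x => x < n) D].

Lemma loop1_exit c : I1' 0 c -> reaches PROG c (fun c' => Mid c' \/ Qfin c') 20.
Proof.
case: c => pc m [i [hij [/= -> h1 h2 h3 [h4 hin hloc hcnt hall]]]].
rewrite addn0 in hij; subst i.
st; rewrite ltnn /=; st.
apply: reach_now; left; split => //; split.
- by move=> d /=; rewrite hcnt take_size.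
- by rewrite -(take_size D).
Qed.

Definition I3 (d : nat) (c : config) :=
  [/\ c.1 = 63, c.2 2 = Posz k, c.2 4 = Posz (C + n), c.2 7 = Posz (C + d) &
   [/\ forall e, c.2 (C + e) = Posz (count_mem e D), all (fun x => x < n) D,
     count_mem 0 D = 1, d < n & forall e, e < d -> count_mem e.+1 D <= k * count_mem e D]].
Definition I3' j c := exists d, d + j.+1 = n /\ I3 d c.

Lemma not_cond0 : count_mem 0 D <> 1 -> ~ cond k D.
Proof. by move=> h [h0 _]. Qed.

Lemma mid_block c : Mid c -> reaches PROG c (fun c' => I3' n.-1 c' \/ Qfin c') 10.
Proof.
case: c => pc m [/= -> h1 h2 h3 [hcnt hall]].
have hA : A = n + 8 * k by [].
have hC : C = A + 8 by [].
have hc0 : forall a, a = C + 0 -> m a = Posz (count_mem 0 D) by move=> a ->; exact: hcnt.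
do 2 st. st. rewrite hc0; last lia.
st. st. case: ifP => hlt.
{ do 2 st; apply: reach_now; right; split => //; rewrite /output /=; split => // hc; exfalso; apply: (not_cond0 _ hc).
  by move=> e; move: hlt; rewrite e. }
st. case: ifP => hgt.
{ do 2 st; apply: reach_now; right; split => //; rewrite /output /=; split => // hc; exfalso; apply: (not_cond0 _ hc).
  by move=> e; move: hgt; rewrite e. }
have e1 : count_mem 0 D = 1 by move: hlt hgt => /=; lia.
have hn : 0 < n by rewrite /n -has_predT; apply/hasP; exists 0 => //; rewrite -has_pred1 has_count e1.
st. apply: reach_now; left; exists 0; split; first lia.
split => //=; dec; rwm.
- congr Posz; lia.
- split => // e; dec; exact: hcnt.
Qed.

Lemma loop3_step j c : I3' j.+1 c -> reaches PROG c (fun c' => I3' j c' \/ Qfin c') 12.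
Proof.
case: c => pc m [d [hdj [/= -> h2 h4 h7 [hcnt hall e1 hdn hprev]]]].
have hA : A = n + 8 * k by [].
have hC : C = A + 8 by [].
have hcd : forall a, a = C + d -> m a = Posz (count_mem d D) by move=> a ->; exact: hcnt.
have hcd1 : forall a, a = C + d.+1 -> m a = Posz (count_mem d.+1 D) by move=> a ->; exact: hcnt.
have hlt : (C + d + 1 < C + n) = true by apply/idP; lia.
do 2 st. st. rewrite hlt.
st. rewrite hcd; last lia.
st. st. rewrite hcd1; last lia.
st. case: ifP => hbad.
{ do 2 st; apply: reach_now; right; split => //; rewrite /output /=; split => // -[_ hS].
  by move: (hS d); rewrite leqNgt mulnC hbad. }
do 3 st. apply: reach_now; left; exists d.+1; split; first lia.
split => //=; dec; rwm.
- congr Posz; lia.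
- split => //; first by move=> e; dec; exact: hcnt.
  + lia.
  + move=> e he; case: (ltnP e d) => hed; first exact: hprev.
    have -> : e = d by lia.
    by move: hbad; rewrite mulnC; case: ltnP.
Qed.

Lemma loop3_exit c : I3' 0 c -> reaches PROG c Qfin 12.
Proof.
case: c => pc m [d [hdj [/= -> h2 h4 h7 [hcnt hall e1 hdn hprev]]]].
have hlt : (C + d + 1 < C + n) = false by apply/negbTE; lia.
do 2 st. st. rewrite hlt /=.
do 2 st. apply: reach_now; split => //; rewrite /output /=; split => // _.
split => // e; case: (ltnP e d) => hed; first exact: hprev.
have -> : count_mem e.+1 D = 0 => //.
apply/count_memPn; apply/negP => hin.
have := allP hall _ hin; lia.
Qed.

Lemma reach_impl P c (Q Q' : config -> Prop) T :
  reaches P c Q T -> (forall c, Q c -> Q' c) -> reaches P c Q' T.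
Proof. by move=> [s [hs hq]] h; exists s; split => //; apply: h. Qed.

Lemma total : reaches PROG (init k D) Qfin
  (40 + (n.+1 * 20 + (10 + n.-1.+1 * 12))).
Proof.
have -> : init k D = (0, (init k D).2) by [].
apply: (@reach_seq _ _ (I1' n)).
  have hD : forall j, j < n -> (init k D).2 (j + 2) = Posz (nth 0 D j).
    by move=> j hj; rewrite /init /= addn2 /= !ltnS hj !subSS subn0.
  have hz : forall i, n + 2 <= i -> (init k D).2 i = 0%R.
    move=> i hi; rewrite /init /=.
    rewrite (_ : i == 0 = false); last lia.
    rewrite (_ : i == 1 = false); last lia.
    by rewrite ifF //; apply/negbTE; rewrite -leqNgt; rewrite -addn2.
  apply: reach_impl (setup (m := (init k D).2) erefl erefl hD hz) _.
  by move=> c hc; exists 0.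
move=> c1 hc1.
have st1 : forall j c, I1' j.+1 c -> reaches PROG c (fun c' => I1' j c' \/ (Mid c' \/ Qfin c')) 20.
  move=> j c h; apply: reach_impl (loop1_step h) _; tauto.
apply: reach_seq (reach_loop st1 loop1_exit hc1) _.
move=> c2 [hm|hq]; last exact: reach_now.
apply: reach_seq (mid_block hm) _.
move=> c3 [h3|hq]; last exact: reach_now.
apply: (reach_loop (Inv := I3') (@loop3_step) (@loop3_exit) h3).
Qed.

End S.

Lemma run_halted P c t : halted P c -> run P t c = c.
Proof.
move=> h; have hs : step P c = c.
  by move: h; case: c => pc m; rewrite /halted /step /=; case: nth.
by elim: t => // t IH; rewrite /run iterS -/(run P t c) IH.
Qed.

Theorem mainTheorem8 :
  exists (P : program) (c : nat),
    forall (k : nat) (D : seq nat), 1 <= k ->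
      let n := size D in
      let fin := run P (c * (n * trunc_log 2 n + 1)) (init k D) in
      halted P fin /\ (output fin <-> kary_depth_realizable k D).
Proof.
exists PROG, 200 => k D hk n fin.
have [s [hs [hh ho]]] := total D hk.
have hle : s <= 200 * (n * trunc_log 2 n + 1).
  apply: leq_trans hs _.
  have [hn|hn] := leqP n 1.
    have : n * trunc_log 2 n + 1 >= 1 by lia.
    rewrite /n in hn *; lia.
  have ht : 0 < trunc_log 2 n by rewrite trunc_log_gt0.
  have : n <= n * trunc_log 2 n by rewrite leq_pmulr.
  rewrite /n in hn *; lia.
have e : fin = run PROG s (init k D).
  by rewrite /fin -(subnK hle) /run iterD; apply: run_halted.
rewrite e; split => //; rewrite ho; symmetry; exact: real_iff.
Qed.
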